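(* Let $\Omega$ be a completely regular Hausdorff space with Stone–Čech compactification $\beta\Omega$. Let $A \subset C(\Omega, [0, 1])$, or let $A$ be a self-adjoint subalgebra of $C_{b}(\Omega, \mathbb{C})$. If $A$ separates disjoint zero-sets of $\Omega$, then for any $A$-antisymmetric $z$-filter $\mathcal{F}$ on $\Omega$, the set $\bigcap_{F \in \mathcal{F}}\mathrm{cl}_{\beta}F$ consists of exactly one point of $\beta \Omega$.
   Context: $\mathrm{cl}_\beta$ denotes closure in $\beta\Omega$; $C_b$ denotes bounded continuous functions. A zero-set is $h^{-1}(0)$ for some $h\in C(\Omega,\mathbb{R})$. $A$ separates disjoint zero-sets of $\Omega$ if for disjoint zero-sets $Z_1,Z_2$ there is $\varphi\in A$ with $\overline{\varphi(Z_1)}\cap\overline{\varphi(Z_2)}=\emptyset$. A $z$-filter is a nonempty family $\mathcal{F}$ of zero-sets with $\emptyset\notin\mathcal{F}$, closed under finite intersections and under passing to larger zero-sets. $\mathcal{F}$ is $A$-antisymmetric if for each $\phi\in A$ with $\bigcap_{F\in\mathcal{F}}\overline{\phi(F)}\subset[0,1]$ (closures in $\mathbb{C}\cup\{\infty\}$), this intersection is a single point. *)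

(* Defs.v *)
From HB Require Import structures.
From mathcomp Require Import all_boot all_order all_algebra.
From mathcomp Require Import complex.
From mathcomp Require Import all_classical all_reals all_analysis.
Import Order.TTheory GRing.Theory Num.Theory.
Import numFieldTopology.Exports.

Set Implicit Arguments.
Unset Strict Implicit.
Unset Printing Implicit Defensive.

Local Open Scope classical_set_scope.
Local Open Scope ring_scope.
Local Open Scope complex_scope.

(* Usual (modulus) topology on the complex numbers R[i]. *)
HB.instance Definition _ (R : rcfType) := PseudoPointedMetric.copy R[i] (R[i])^o.

Definition is_stone_cech (T K : topologicalType) (e : T -> K) : Prop :=
  [/\ compact [set: K], hausdorff_space K, continuous e, injective e &
      (forall U : set T, open U -> exists V : set K, open V /\ U = e @^-1` V)]
  /\ closure (range e) = [set: K]
  /\ (forall (Y : topologicalType) (f : T -> Y),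
        compact [set: Y] -> hausdorff_space Y -> continuous f ->
        exists g : K -> Y, continuous g /\ g \o e = f).

Definition zero_set (R : realType) (T : topologicalType) (Z : set T) : Prop :=
  exists h : T -> R, continuous h /\ Z = h @^-1` [set 0].

Definition separates_zero_sets (R : realType) (T : topologicalType)
    (A : set (T -> R[i])) : Prop :=
  forall Z1 Z2 : set T, zero_set R Z1 -> zero_set R Z2 -> Z1 `&` Z2 = set0 ->
    exists2 phi, A phi & closure (phi @` Z1) `&` closure (phi @` Z2) = set0.

Definition z_filter (R : realType) (T : topologicalType) (F : set (set T)) : Prop :=
  [/\ F !=set0,
      (forall Z, F Z -> zero_set R Z),
      ~ F set0,
      (forall Z1 Z2, F Z1 -> F Z2 -> F (Z1 `&` Z2)) &
      (forall Z1 Z2, F Z1 -> zero_set R Z2 -> Z1 `<=` Z2 -> F Z2)].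

(* The real unit interval [0,1] as a subset of C (the order on R[i] is
   z <= w iff w - z is a nonnegative real). *)
Definition unit_interval (R : rcfType) : set R[i] := [set z | 0 <= z <= 1].

(* A-antisymmetric z-filters.  All functions in A are bounded (in both cases
   of the theorem), so closures in C u {oo} coincide with closures in C. *)
Definition A_antisymmetric (R : realType) (T : topologicalType)
    (A : set (T -> R[i])) (F : set (set T)) : Prop :=
  forall phi, A phi ->
    \bigcap_(Z in F) closure (phi @` Z) `<=` @unit_interval R ->
    exists z : R[i], \bigcap_(Z in F) closure (phi @` Z) = [set z].

Definition in_C01 (R : realType) (T : topologicalType) (A : set (T -> R[i])) : Prop :=
  forall phi, A phi -> continuous phi /\ forall x, 0 <= phi x <= 1.

Definition selfadjoint_subalgebra_Cb (R : realType) (T : topologicalType)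
    (A : set (T -> R[i])) : Prop :=
  [/\ (forall phi, A phi ->
         continuous phi /\ exists M : R, forall x, `|phi x| <= M%:C),
      A (fun _ => 0),
      (forall phi psi, A phi -> A psi -> A (fun x => phi x + psi x)) &
      (forall (c : R[i]) phi, A phi -> A (fun x => c * phi x))]
  /\ (forall phi psi, A phi -> A psi -> A (fun x => phi x * psi x))
  /\ (forall phi, A phi -> A (fun x => (phi x)^*)).

(* Main.v *)
Require Import Defs.
From HB Require Import structures.
From mathcomp Require Import all_boot all_order all_algebra.
From mathcomp Require Import complex.
From mathcomp Require Import all_classical all_reals all_analysis.
From mathcomp Require Import ring lra.
Import Order.TTheory GRing.Theory Num.Theory.
Import numFieldTopology.Exports.
Local Open Scope classical_set_scope.
Local Open Scope ring_scope.
Local Open Scope complex_scope.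
Section C.
Variable R : realType.
Lemma normC_le (u v : R) : `|(u +i* v) : R[i]| <= (`|u| + `|v|)%:C.
Proof.
rewrite normc_def /= lecR.
rewrite -(ger0_norm (addr_ge0 (normr_ge0 u) (normr_ge0 v))) -sqrtr_sqr.
rewrite ler_sqrt ?sqr_ge0 //.
rewrite sqrrD !real_normK ?num_real //.
have := mulr_ge0 (normr_ge0 u) (normr_ge0 v). lra.
Qed.

Lemma pos_complex (eps : R[i]) : 0 < eps -> eps = (complex.Re eps)%:C /\ 0 < complex.Re eps.
Proof.
case: eps => a b; rewrite ltcE /= => /andP[/eqP -> h]; split => //.
Qed.

Lemma cont_mkC (X : topologicalType) (g1 g2 : X -> R) :
  continuous g1 -> continuous g2 -> continuous (fun x => (g1 x +i* g2 x) : R[i]).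
Proof.
move=> c1 c2 x.
apply/(@cvgrPdist_lt R[i] R[i]^o) => eps /pos_complex [epsE e0]; rewrite epsE.
have /cvgrPdist_lt /(_ _ (divr_gt0 e0 (ltr0n _ 2))) h1 := c1 x.
have /cvgrPdist_lt /(_ _ (divr_gt0 e0 (ltr0n _ 2))) h2 := c2 x.
near=> t.
have l1 : `|g1 x - g1 t| < complex.Re eps / 2 by near: t.
have l2 : `|g2 x - g2 t| < complex.Re eps / 2 by near: t.
apply: (le_lt_trans (normC_le _ _)); rewrite ltcR. lra.
Unshelve. all: end_near.
Qed.

Lemma cont_Re : continuous (fun z : R[i] => complex.Re z).
Proof.
move=> z; apply: (iffRL (@cvgrPdist_lt _ _ _ (nbhs z) (nbhs_filter z) _ _)) => e e0.
have := (iffLR (@cvgrPdist_lt R[i] R[i]^o _ _ _ _ _) (@cvg_id _ (nbhs (z : R[i]^o))) e%:C).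
rewrite ltcR => /(_ (nbhs_filter _) e0) h.
apply: filterS h => t.
case: z => a b; case: t => c d.
rewrite normc_def /= ltcR => H; apply: le_lt_trans H.
rewrite -sqrtr_sqr ler_sqrt ?addr_ge0 ?sqr_ge0 //.
rewrite lerDl sqr_ge0 //.
Qed.

Lemma cont_Im : continuous (fun z : R[i] => complex.Im z).
Proof.
move=> z; apply: (iffRL (@cvgrPdist_lt _ _ _ (nbhs z) (nbhs_filter z) _ _)) => e e0.
have := (iffLR (@cvgrPdist_lt R[i] R[i]^o _ _ _ _ _) (@cvg_id _ (nbhs (z : R[i]^o))) e%:C).
rewrite ltcR => /(_ (nbhs_filter _) e0) h.
apply: filterS h => t.
case: z => a b; case: t => c d.
rewrite normc_def /= ltcR => H; apply: le_lt_trans H.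
rewrite -sqrtr_sqr ler_sqrt ?addr_ge0 ?sqr_ge0 //.
rewrite lerDr sqr_ge0 //.
Qed.
Lemma closure_image (X Y : topologicalType) (h : X -> Y) (S : set X) p :
  {for p, continuous h} -> closure S p -> closure (h @` S) (h p).
Proof.
move=> ch clS B nB.
have : nbhs p (h @^-1` B) by apply: ch.
move=> /clS [x [Sx Bx]]; exists (h x); split => //; by exists x.
Qed.

Lemma closure_in_closed (T : topologicalType) (E S : set T) :
  closed E -> S `<=` E -> closure S `<=` E.
Proof. by move=> cE SE; rewrite [X in _ `<=` X](closure_id E).1 //; apply: closure_subset. Qed.

Lemma closure_unit (X : topologicalType) (psi : X -> R[i]) (S : set X) :
  (forall x, 0 <= psi x <= 1) -> closure (psi @` S) `<=` @unit_interval R.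
Proof.
move=> h y cly.
have r1 : closure ((fun z => complex.Re z) @` (psi @` S)) (complex.Re y).
  exact: closure_image (@cont_Re y) cly.
have r2 : closure ((fun z => complex.Im z) @` (psi @` S)) (complex.Im y).
  exact: closure_image (@cont_Im y) cly.
have a1 : 0 <= complex.Re y.
  move: r1; apply: (@closure_in_closed _ [set r : R | 0 <= r]); first exact: closed_ge.
  move=> _ [_ [x _ <-] <-]; have := h x; rewrite !lecE /= => /andP[/andP[_ ?] /andP[_ ?]] //.
have a1' : complex.Re y <= 1.
  move: r1; apply: (@closure_in_closed _ [set r : R | r <= 1]); first exact: closed_le.
  move=> _ [_ [x _ <-] <-]; have := h x; rewrite !lecE /= => /andP[/andP[_ ?] /andP[_ ?]] //.
have a2 : complex.Im y = 0.
  move: r2; apply: (@closure_in_closed _ [set r : R | r = 0]); first exact: closed_eq.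
  move=> _ [_ [x _ <-] <-]; have := h x; rewrite !lecE /= => /andP[/andP[/eqP ? _] _] //.
rewrite /unit_interval /= !lecE /= a2 a1 a1'.
by rewrite eqxx.
Qed.
Lemma fip_cluster (T : topologicalType) (K : set T) (I : Type) (D : set I) (g : I -> set T) :
  compact K -> (exists2 i, D i & g i `<=` K) -> (forall i, D i -> g i !=set0) ->
  (forall i j, D i -> D j -> exists2 k, D k & g k `<=` g i `&` g j) ->
  exists p, forall i, D i -> closure (g i) p.
Proof.
move=> cK [i0 Di0 gK] ne dir.
have FF : Filter (filter_from D g).
  apply: filter_from_filter; first by exists i0.
  by move=> i j Di Dj; have [k Dk gk] := dir i j Di Dj; exists k.
have PF : ProperFilter (filter_from D g) by apply: filter_from_proper.
have [|p [Kp clp]] := cK _ PF; first by exists i0.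
exists p => i Di B nB; apply: clp nB; by exists i.
Qed.

Lemma zs_le (X : topologicalType) (k : X -> R) (c : R) :
  continuous k -> zero_set R [set x | k x <= c].
Proof.
move=> ck; exists (fun x => (k x - c) + `|k x - c|); split.
  move=> x; apply: cvgD.
    by apply: cvgB; [exact: ck | exact: cvg_cst].
  apply: cvg_norm.
  by apply: cvgB; [exact: ck | exact: cvg_cst].
apply/seteqP; split => x /=.
  by rewrite -subr_le0 => h; rewrite ler0_norm // subrr.
case: (leP (k x - c) 0) => [|h]; first by rewrite subr_le0.
rewrite gtr0_norm // => H; lra.
Qed.

Lemma zs_ge (X : topologicalType) (k : X -> R) (c : R) :
  continuous k -> zero_set R [set x | c <= k x].
Proof.
move=> ck; suff -> : [set x | c <= k x] = [set x | - k x <= - c].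
  exact: (@zs_le X (fun x => - k x) (- c) (fun x => cvgN (ck x))).
by apply/seteqP; split => x /=; rewrite lerN2.
Qed.

Lemma cube_inj (s t : R) : s ^+ 2 = t ^+ 2 -> s ^+ 3 = t ^+ 3 -> s = t.
Proof.
move=> h2 h3.
have : (s - t) * (s + t) = 0 by rewrite -subr_sqr h2 subrr.
move/eqP; rewrite mulf_eq0 => /orP[/eqP|/eqP] h; first by apply/eqP; rewrite -subr_eq0 h.
have st : s = - t by apply/eqP; rewrite -subr_eq0 opprK h.
have e3 : (- t) ^+ 3 = - t ^+ 3 by ring.
move: h3; rewrite st e3 => h3.
have : t ^+ 3 = 0 by lra.
move/eqP; rewrite expf_eq0 /= => /eqP t0.
by rewrite t0 oppr0.
Qed.
Lemma cfst : continuous (fun a : R * R => a.1).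
Proof. move=> a; exact: cvg_fst. Qed.
Lemma csnd : continuous (fun a : R * R => a.2).
Proof. move=> a; exact: cvg_snd. Qed.
Lemma in01C (t : R) : 0 <= t <= 1 -> 0 <= (t%:C : R[i]) <= 1.
Proof. by rewrite -[1 : R[i]]/(1%:C) ler0c lecR. Qed.
Lemma rm (a b M : R) : M != 0 -> ((a / M) * (a / M))%:C = ((M * M)^-1)%:C * (a%:C * a%:C) :> R[i].
Proof. move=> M0; rewrite -!rmorphM; congr (_%:C); field; done. Qed.
Lemma nr (s : R) : -1 <= s <= 1 -> 0 <= (s * s + s * (s * s)) / 2 <= 1.
Proof. move=> /andP[h1 h2]; apply/andP; split; nra. Qed.
Lemma lr (s t : R) : s * s = t * t -> (s * s + s * (s * s)) / 2 = (t * t + t * (t * t)) / 2 -> s * (s * s) = t * (t * t).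
Proof. move=> h1 h2; lra. Qed.

Lemma div_bound (r M : R) : 0 < M -> `|r| <= M -> -1 <= r / M <= 1.
Proof.
move=> M0 h; rewrite -ler_norml normrM normfV (gtr0_norm M0) ler_pdivrMr // mul1r //.
Qed.

Lemma Re_le_normc (z : R[i]) : `|complex.Re z| <= Num.sqrt (complex.Re z ^+ 2 + complex.Im z ^+ 2).
Proof. by rewrite -sqrtr_sqr ler_sqrt ?addr_ge0 ?sqr_ge0 // lerDl sqr_ge0. Qed.

Lemma Im_le_normc (z : R[i]) : `|complex.Im z| <= Num.sqrt (complex.Re z ^+ 2 + complex.Im z ^+ 2).
Proof. by rewrite -sqrtr_sqr ler_sqrt ?addr_ge0 ?sqr_ge0 // lerDr sqr_ge0. Qed.
Lemma thirds (t : R) : t <= 1/3 -> 2/3 <= t -> False.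
Proof. move=> h1 h2; lra. Qed.
Lemma lt13 : (0:R) < 1/3. Proof. lra. Qed.
Lemma gt23 : (2/3:R) < 1. Proof. lra. Qed.
Lemma bound_lem (M1 a b n : R) : n <= M1 -> a <= n -> b <= n ->
  a <= `|M1| + 1 /\ b <= `|M1| + 1.
Proof. have := ler_norm M1; move=> *; split; lra. Qed.
Lemma pos_lem (M1 : R) : 0 < `|M1| + 1.
Proof. have := normr_ge0 M1; lra. Qed.
End C.

Theorem corollary2p15 (R : realType) (Omega : topologicalType)
    (hOmega : hausdorff_space Omega) (crOmega : completely_regular_space Omega)
    (betaOmega : topologicalType) (e : Omega -> betaOmega)
    (he : is_stone_cech e)
    (A : set (Omega -> R[i]))
    (hA : in_C01 A \/ selfadjoint_subalgebra_Cb A)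
    (hsep : separates_zero_sets A)
    (F : set (set Omega)) (hF : z_filter R F) (hanti : A_antisymmetric A F) :
  exists p : betaOmega, \bigcap_(Z in F) closure (e @` Z) = [set p].
Proof.
case: hF => [[Z0 FZ0] Fzs F0 FI Fup].
have Fne : forall Z, F Z -> Z !=set0.
  move=> Z FZ; apply/set0P/negP => /eqP Z0'; apply: F0; by rewrite -Z0'.
case: he => [[cK hK ce ie eop] [dense ext]].
have [p hp] : exists p, forall Z, F Z -> closure (e @` Z) p.
  apply: (@fip_cluster _ [set: betaOmega] _ F (fun Z => e @` Z) cK).
  - by exists Z0.
  - by move=> Z FZ; have [x Zx] := Fne Z FZ; exists (e x), x.
  - move=> Z1 Z2 F1 F2; exists (Z1 `&` Z2); first exact: FI.
    by move=> _ [x [? ?] <-]; split; exists x.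
exists p; apply/seteqP; split; last by move=> _ -> Z FZ; exact: hp.
move=> q hq.
have {}hq : forall Z, F Z -> closure (e @` Z) q by move=> Z FZ; exact: hq.
have [//|pq] := pselect (q = p).
exfalso.
have nK : normal_space betaOmega := compact_normal hK cK.
have aK : accessible_space betaOmega := hausdorff_accessible hK.
have crK := @normal_completely_regular R betaOmega nK aK.
have := crK p [set q] (@accessible_closed_set1 betaOmega aK q) (fun h => pq (esym h)).
move=> /(@uniform_separatorP _ R) [g [cg g01 gp gq]].
have g0 : g p = 0 by apply: gp; exists p.
have g1 : g q = 1 by apply: gq; exists q.
have cge : continuous (fun x => g (e x)).
  by move=> x; apply: continuous_comp; [exact: ce | exact: cg].
pose Z1 := [set x | g (e x) <= 1/3].
pose Z2 := [set x | 2/3 <= g (e x)].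
have zZ1 : zero_set R Z1 := @zs_le R Omega _ (1/3) cge.
have zZ2 : zero_set R Z2 := @zs_ge R Omega _ (2/3) cge.
have Z12 : Z1 `&` Z2 = set0.
  by apply/seteqP; split => x // [h1 h2]; exfalso; exact: thirds h1 h2.
have [phi Aphi disj] := hsep _ _ zZ1 zZ2 Z12.
have meet1 : forall Z, F Z -> (Z `&` Z1) !=set0.
  move=> Z FZ.
  have nb : nbhs p (g @^-1` [set r | r < 1/3]).
    apply: (cg p); apply: open_nbhs_nbhs; split; [exact: open_lt | rewrite /= g0; exact: lt13].
  have [_ [[x Zx <-] /= gx]] := hp Z FZ _ nb.
  by exists x; split => //; rewrite /Z1 /= ltW.
have meet2 : forall Z, F Z -> (Z `&` Z2) !=set0.
  move=> Z FZ.
  have nb : nbhs q (g @^-1` [set r | 2/3 < r]).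
    apply: (cg q); apply: open_nbhs_nbhs; split; [exact: open_gt | rewrite /= g1; exact: gt23].
  have [_ [[x Zx <-] /= gx]] := hq Z FZ _ nb.
  by exists x; split => //; rewrite /Z2 /= ltW.

have [M [M0 hM]] : exists M : R, 0 < M /\
    forall x, `|complex.Re (phi x)| <= M /\ `|complex.Im (phi x)| <= M.
  case: hA => [h01 | [[hcb _ _ _] _]].
    exists 1; split => // x; have [_ /(_ x)] := h01 phi Aphi.
    rewrite !lecE /= => /andP[/andP[/eqP i0 r0] /andP[_ r1]].
    by rewrite i0 normr0 ger0_norm.
  have [_ [M1 hM1]] := hcb phi Aphi.
  exists (`|M1| + 1); split; first exact: pos_lem.
  move=> x; have := hM1 x; rewrite normc_def lecR => h.
  exact: bound_lem h (@Re_le_normc R (phi x)) (@Im_le_normc R (phi x)).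
pose f := fun x => (complex.Re (phi x) / M, complex.Im (phi x) / M).
pose K := (`[-1, 1]%classic : set R) `*` (`[-1, 1]%classic : set R).
have cKK : compact K by apply: compact_setX; exact: segment_compact.
have fb : forall x, -1 <= (f x).1 <= 1 /\ -1 <= (f x).2 <= 1.
  by move=> x; have [h1 h2] := hM x; split; apply: div_bound.
have fK : forall S, f @` S `<=` K.
  by move=> S _ [x _ <-]; have [h1 h2] := fb x; split; rewrite /= in_itv /=.
have clsub : forall (S S' : set Omega) a, S `<=` S' ->
    closure (f @` S) a -> closure (f @` S') a.
  by move=> S S' a sS; apply: closure_subset; exact: image_subset.
have [ap hap] : exists ap, forall Z, F Z -> closure (f @` (Z `&` Z1)) ap.
  apply: (@fip_cluster _ K _ F (fun Z => f @` (Z `&` Z1)) cKK).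
  - by exists Z0 => //; apply: fK.
  - by move=> Z FZ; have [x Zx] := meet1 Z FZ; exists (f x), x.
  - move=> Z Z' FZ FZ'; exists (Z `&` Z'); first exact: FI.
    by move=> _ [x [[? ?] ?] <-]; split; exists x.
have [aq haq] : exists aq, forall Z, F Z -> closure (f @` (Z `&` Z2)) aq.
  apply: (@fip_cluster _ K _ F (fun Z => f @` (Z `&` Z2)) cKK).
  - by exists Z0 => //; apply: fK.
  - by move=> Z FZ; have [x Zx] := meet2 Z FZ; exists (f x), x.
  - move=> Z Z' FZ FZ'; exists (Z `&` Z'); first exact: FI.
    by move=> _ [x [[? ?] ?] <-]; split; exists x.
have key : forall Q : R * R -> R[i], continuous Q -> A (fun x => Q (f x)) ->
    (forall x, 0 <= Q (f x) <= 1) -> Q ap = Q aq.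
  move=> Q cQ AQ Q01.
  have [|z hz] := hanti _ AQ.
    by move=> y hy; exact: (@closure_unit R Omega _ Z0 Q01 _ (hy Z0 FZ0)).
  have inI : forall a, (forall Z, F Z -> closure (f @` Z) a) ->
      (\bigcap_(Z in F) closure ((fun x => Q (f x)) @` Z)) (Q a).
    move=> a ha Z FZ; rewrite -(image_comp f Q).
    exact: closure_image (cQ a) (ha Z FZ).
  have h1 : Q ap = z.
    have := inI ap (fun Z FZ => clsub _ _ _ (@subIsetl _ Z Z1) (hap Z FZ)).
    by rewrite hz.
  have h2 : Q aq = z.
    have := inI aq (fun Z FZ => clsub _ _ _ (@subIsetl _ Z Z2) (haq Z FZ)).
    by rewrite hz.
  by rewrite h1 h2.
suff [J [cJ Jf Jeq]] : exists J : R * R -> R[i],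
    [/\ continuous J, forall x, J (f x) = phi x & J ap = J aq].
  have Jphi : J \o f = phi by apply: funext => x; exact: Jf.
  have c1 : closure (phi @` Z1) (J ap).
    have := @closure_image _ _ J _ ap (cJ ap) (clsub _ _ _ (@subIsetr _ Z0 Z1) (hap Z0 FZ0)).
    by rewrite image_comp Jphi.
  have c2 : closure (phi @` Z2) (J ap).
    have := @closure_image _ _ J _ aq (cJ aq) (clsub _ _ _ (@subIsetr _ Z0 Z2) (haq Z0 FZ0)).
    by rewrite image_comp Jphi Jeq.
  have : (closure (phi @` Z1) `&` closure (phi @` Z2)) (J ap) by split.
  by rewrite disj.

have cM : forall k : R * R -> R, continuous k -> continuous (fun a => M * k a).
  by move=> k ck a; apply: cvgM; [exact: cvg_cst | exact: ck].
have M0' : M != 0 by rewrite gt_eqF.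
case: hA => [h01 | [[hcb h0 hadd hscal] [hmul hconj]]].
  pose J := fun a : R * R => ((M * a.1) +i* 0) : R[i].
  have cJ : continuous J by apply: cont_mkC; [exact: cM (@cfst R) | exact: cst_continuous].
  have Jf : forall x, J (f x) = phi x.
    move=> x; have [_ /(_ x)] := h01 phi Aphi.
    rewrite /J /f /=; case: (phi x) => a b; rewrite !lecE /= => /andP[/andP[/eqP -> _] _].
    by rewrite mulrC divfK.
  exists J; split => //; apply: key => //.
    by have -> : (fun x => J (f x)) = phi by apply: funext => x; exact: Jf.
  by move=> x; rewrite Jf; have [_] := h01 phi Aphi; apply.
pose J := fun a : R * R => ((M * a.1) +i* (M * a.2)) : R[i].
have cJ : continuous J by apply: cont_mkC; [exact: cM (@cfst R) | exact: cM (@csnd R)].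
have Jf : forall x, J (f x) = phi x.
  by move=> x; rewrite /J /f /=; case: (phi x) => a b /=; rewrite !(mulrC M) !divfK.
exists J; split => //.
have ReA : forall rho, A rho -> A (fun x => (complex.Re (rho x))%:C).
  move=> rho Ar; have := hscal (2%:R^-1) _ (hadd _ _ Ar (hconj _ Ar)).
  suff -> : (fun x => (complex.Re (rho x))%:C) =
     (fun x => 2%:R^-1 * (rho x + (rho x)^*)) by [].
  by apply: funext => x; rewrite ReJ_add mulrC.
have ImA : forall rho, A rho -> A (fun x => (complex.Im (rho x))%:C).
  move=> rho Ar; have := hscal (-1) _ (ReA _ (hscal 'i _ Ar)).
  suff -> : (fun x => (complex.Im (rho x))%:C) =
     (fun x => -1 * (complex.Re ('i * rho x))%:C) by [].
  by apply: funext => x; rewrite [X in complex.Re X]mulrC ReiNIm rmorphN mulN1r opprK.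
have comp : forall (k : R * R -> R) (r : Omega -> R), continuous k ->
    (forall x, k (f x) = r x / M) -> A (fun x => (r x)%:C) ->
    (forall x, -1 <= k (f x) <= 1) -> k ap = k aq.
  move=> k r ck kf Ar kb.
  pose Q1 := fun a => ((k a * k a) +i* 0) : R[i].
  pose Q2 := fun a => (((k a * k a + k a * (k a * k a)) / 2) +i* 0) : R[i].
  have cQ1 : continuous Q1.
    apply: cont_mkC; last exact: cst_continuous.
    by move=> a; apply: cvgM; exact: ck.
  have cQ2 : continuous Q2.
    apply: cont_mkC; last exact: cst_continuous.
    move=> a; apply: cvgM; last exact: cvg_cst.
    by apply: cvgD; apply: cvgM; try apply: cvgM; exact: ck.
  have e1 : Q1 ap = Q1 aq.
    apply: key => //.
      have := hscal ((M * M)^-1)%:C _ (hmul _ _ Ar Ar).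
      suff -> : (fun x => Q1 (f x)) = (fun x => ((M * M)^-1)%:C * ((r x)%:C * (r x)%:C)) by [].
      apply: funext => x; rewrite /Q1 kf -!rmorphM; congr (_%:C); field; done.
    move=> x; apply: in01C; have := kb x; move: (k (f x)) => t /andP[? ?]; apply/andP; split; nra.
  have e2 : Q2 ap = Q2 aq.
    apply: key => //.
      have := hadd _ _ (hscal ((2 * M * M)^-1)%:C _ (hmul _ _ Ar Ar))
                       (hscal ((2 * M * M * M)^-1)%:C _ (hmul _ _ Ar (hmul _ _ Ar Ar))).
      suff -> : (fun x => Q2 (f x)) = (fun x => ((2 * M * M)^-1)%:C * ((r x)%:C * (r x)%:C)
          + ((2 * M * M * M)^-1)%:C * ((r x)%:C * ((r x)%:C * (r x)%:C))) by [].
      apply: funext => x; rewrite /Q2 kf -!rmorphM -rmorphD; congr (_%:C); field; done.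
    by move=> x; apply: in01C; apply: nr; exact: kb.
  move: e1 e2; rewrite /Q1 /Q2 => -[e1] [e2].
  apply: cube_inj; first by rewrite !expr2.
  by rewrite !exprS expr0 !mulr1; apply: lr.
have e1 := comp _ _ (@cfst R) (fun x => erefl) (ReA _ Aphi) (fun x => (fb x).1).
have e2 := comp _ _ (@csnd R) (fun x => erefl) (ImA _ Aphi) (fun x => (fb x).2).
by rewrite /J e1 e2.
Qed.
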